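(* Under the sampling rule of F-TaS (described in the context), run indefinitely on the $K$-armed unit-variance Gaussian bandit with $\theta\in\Theta$, with either pre-specified or $\theta$-dependent fairness rates, every arm is sampled infinitely often: $\mathbb{P}_\theta(\lim_{t\to\infty}N_a(t)=\infty)=1$ for all $a\in[K]$.
   Context: Bandit model: arms $[K]$, unknown $\theta\in\Theta:=\{\theta\in\mathbb{R}^K:\arg\max_a\theta_a\text{ unique}\}$, reward $r_t\sim\mathcal N(\theta_{a_t},1)$. $N_a(t)=\sum_{s\le t}\mathbf1\{a_s=a\}$. Fairness rates: pre-specified $p\in[0,1]^K$ with $p_{\rm sum}=\sum_ap_a\le1$, or continuous $p:\mathbb{R}^K\to[0,1]^K$ with sum at most $1$. $\Sigma_p=\{w\in[0,1]^K:w\ge p,\sum_aw_a=1\}$; for a parameter $\lambda$ with unique best arm $a^\star_\lambda$ and gaps $\Delta_a(\lambda)$, $w^\star_p(\lambda)\in\arg\min_{w\in\Sigma_p}\max_{a\ne a^\star_\lambda}(w_a^{-1}+w_{a^\star_\lambda}^{-1})/\Delta_a(\lambda)^2$ (with $p=p(\lambda)$ in the $\theta$-dependent case). F-TaS sampling rule: $\epsilon_t=1/(2\sqrt t)$; pre-specified case with $K_0=|\{a:p_a=0\}|$: if $K_0=0$, $\pi_{c,a}=p_a+(1-p_{\rm sum})/K$; otherwise $\pi_{c,a}=p_a$ if $p_a>0$ and $(1-p_{\rm sum})/K_0$ if $p_a=0$; $\theta$-dependent case: $\pi_{c,a}=1/K$. At round $t$, $a_t\sim\pi(t)=(1-\epsilon_t)w^\star_p(\hat\theta)+\epsilon_t\pi_c$,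 $\hat\theta$ the current empirical means (fixed convention when undefined). *)

(* Defs.v *)
From HB Require Import structures.
From mathcomp Require Import all_boot all_order all_algebra.
From mathcomp Require Import all_classical all_reals all_analysis.
From mathcomp Require Import normal_distribution.

Set Implicit Arguments.
Unset Strict Implicit.
Unset Printing Implicit Defensive.

Import Order.TTheory GRing.Theory Num.Theory.
Import numFieldNormedType.Exports.

Local Open Scope classical_set_scope.
Local Open Scope ring_scope.

Section FTaS.
Variables (R : realType) (K : nat).

Definition crd (v : 'rV[R]_K) (i : 'I_K) : R := v ord0 i.

Definition is_best (lam : 'rV[R]_K) (b : 'I_K) : Prop :=
  forall a, a != b -> crd lam a < crd lam b.

Definition in_Theta (lam : 'rV[R]_K) : Prop := exists b, is_best lam b.

Definition valid_rates (p : 'rV[R]_K) : Prop :=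
  (forall a, 0 <= crd p a <= 1) /\ \sum_a crd p a <= 1.

Definition in_Sigma (p w : 'rV[R]_K) : Prop :=
  (forall a, crd p a <= crd w a /\ 0 <= crd w a <= 1) /\ \sum_a crd w a = 1.

Definition inve (x : R) : \bar R := if x == 0 then +oo%E else (x^-1)%:E.

Definition ftas_obj (lam : 'rV[R]_K) (b : 'I_K) (w : 'rV[R]_K) : \bar R :=
  (\big[Order.max/-oo]_(a | a != b)
     ((inve (crd w a) + inve (crd w b)) *
      (((crd lam b - crd lam a) ^+ 2)^-1)%:E))%E.

(** [wsel] is a (fixed-convention) selection of w*_{p}(·):
    it always returns an element of Σ_{p(lam)}, and whenever lam has a
    unique best arm b it returns a minimiser of the objective over Σ_{p(lam)}. *)
Definition is_wstar (p : 'rV[R]_K -> 'rV[R]_K) (wsel : 'rV[R]_K -> 'rV[R]_K) : Prop :=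
  forall lam, in_Sigma (p lam) (wsel lam) /\
    forall b, is_best lam b ->
      forall w, in_Sigma (p lam) w -> (ftas_obj lam b (wsel lam) <= ftas_obj lam b w)%E.

Definition K0 (p : 'rV[R]_K) : nat := #|[set a | crd p a == 0]|.

Definition pic_pre (p : 'rV[R]_K) : 'rV[R]_K :=
  let psum := \sum_a crd p a in
  \row_a (if K0 p == 0%N then crd p a + (1 - psum) / K%:R
          else if crd p a > 0 then crd p a else (1 - psum) / (K0 p)%:R).

Definition pic_unif : 'rV[R]_K := \row_a (K%:R)^-1.

Definition eps_t (t : nat) : R := 1 / (2 * Num.sqrt (t%:R)).

Variables (Omega : Type) (arm : nat -> Omega -> 'I_K) (rew : nat -> Omega -> R).
(* Rounds are t = 1, 2, ...; arm t / rew t are the arm pulled / reward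
   observed at round t (the values at index 0 are never used). *)

Definition Npulls (a : 'I_K) (t : nat) (w : Omega) : nat :=
  (\sum_(1 <= s < t.+1) (arm s w == a))%N.

(** Empirical mean vector after t rounds; [theta0 a] is the fixed
    convention used for arms not yet pulled. *)
Definition theta_hat (theta0 : 'rV[R]_K) (t : nat) (w : Omega) : 'rV[R]_K :=
  \row_a (if Npulls a t w == 0%N then crd theta0 a
          else (\sum_(1 <= s < t.+1 | arm s w == a) rew s w) / (Npulls a t w)%:R).

(** Sampling distribution at round t (t >= 1), computed from the data of
    rounds 1..t-1:  π(t) = (1-ε_t) w*_p(θ̂) + ε_t π_c. *)
Definition ftas_pi (theta0 : 'rV[R]_K) (wsel : 'rV[R]_K -> 'rV[R]_K)
  (pic : 'rV[R]_K) (t : nat) (w : Omega) (a : 'I_K) : R :=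
  (1 - eps_t t) * crd (wsel (theta_hat theta0 t.-1 w)) a + eps_t t * crd pic a.

End FTaS.

Definition is_filtration d (T : measurableType d) (F : nat -> set (set T)) : Prop :=
  (forall t, sigma_algebra setT (F t)) /\
  (forall t, F t `<=` measurable) /\
  (forall s t, (s <= t)%N -> F s `<=` F t).

(* Main.v *)
Require Import Defs.
From HB Require Import structures.
From mathcomp Require Import all_boot all_order all_algebra.
From mathcomp Require Import all_classical all_reals all_analysis.
From mathcomp Require Import normal_distribution.
From mathcomp Require Import ring lra zify.
Import Order.TTheory GRing.Theory Num.Theory.
Import numFieldNormedType.Exports.
Local Open Scope classical_set_scope.
Local Open Scope ring_scope.

Lemma int_mono d (T : measurableType d) (R : realType)
  (mu : {measure set T -> \bar R}) (D : set T) (f g : T -> \bar R) :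
  (forall x, D x -> 0 <= g x)%E -> (forall x, D x -> g x <= f x)%E ->
  (\int[mu]_(x in D) g x <= \int[mu]_(x in D) f x)%E.
Proof.
move=> g0 gf.
have f0 : forall x, D x -> (0 <= f x)%E.
  by move=> x Dx; exact: le_trans (g0 x Dx) (gf x Dx).
rewrite (ge0_integralE _ g0) (ge0_integralE _ f0) /=.
apply: ereal_sup_le => _ [h hg <-]; exists h => //= x.
apply: le_trans (hg x) _; rewrite /patch; case: ifP => // /[!inE] Dx; exact: gf.
Qed.

Lemma crd_row (R : realType) K (f : 'I_K -> R) a : crd (\row_i f i) a = f a.
Proof. by rewrite /crd mxE. Qed.

Lemma NpullsS K Omega (arm : nat -> Omega -> 'I_K) a t w :
  Npulls arm a t.+1 w = (Npulls arm a t w + (arm t.+1 w == a))%N.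
Proof. by rewrite /Npulls big_nat_recr. Qed.

Lemma Npulls_mono K Omega (arm : nat -> Omega -> 'I_K) a w s t :
  (s <= t)%N -> (Npulls arm a s w <= Npulls arm a t w)%N.
Proof.
elim: t => [|t IH]; first by rewrite leqn0 => /eqP->.
rewrite leq_eqVlt => /orP[/eqP->//|]; rewrite ltnS => /IH h.
by rewrite NpullsS (leq_trans h) ?leq_addr.
Qed.

Lemma Npulls_const K Omega (arm : nat -> Omega -> 'I_K) a w s :
  (forall u, (s < u)%N -> arm u w != a) ->
  forall t, (Npulls arm a t w <= Npulls arm a s w)%N.
Proof.
move=> h t; case: (leqP t s) => [|/ltnW]; first exact: Npulls_mono.
move=> /subnKC <-; elim: (t - s)%N => [|k IH]; first by rewrite addn0.
rewrite addnS NpullsS (negbTE (h _ _)) ?addn0 //.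
by rewrite ltnS leq_addr.
Qed.

Lemma eps_ge0 (R : realType) t : 0 <= eps_t R t.
Proof. by rewrite /eps_t divr_ge0 // mulr_ge0 // sqrtr_ge0. Qed.

Lemma eps_le1 (R : realType) t : (0 < t)%N -> eps_t R t <= 1.
Proof.
move=> t0; have hs : 1 <= Num.sqrt (t%:R : R).
  by rewrite -{1}sqrtr1 ler_wsqrtr // ler1n.
rewrite /eps_t ler_pdivrMr; [lra|lra].
Qed.

Lemma eps_lb (R : realType) u N : (0 < u)%N -> (0 < N)%N -> (u <= 4 * N * N)%N ->
  1 / (4 * N%:R) <= eps_t R u.
Proof.
move=> u0 N0 uN.
have hs : Num.sqrt (u%:R : R) <= 2 * N%:R.
  have h2 : (0 : R) <= 2 * N%:R by rewrite mulr_ge0.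
  rewrite -(ger0_norm h2) -sqrtr_sqr; apply: ler_wsqrtr.
  have -> : (2 * N%:R : R) = (2 * N)%:R by rewrite natrM.
  by rewrite -natrX ler_nat -mulnn; lia.
have sp : (0 : R) < Num.sqrt (u%:R) by rewrite sqrtr_gt0 ltr0n.
have Np : (0 : R) < N%:R by rewrite ltr0n.
rewrite /eps_t !div1r lef_pV2 ?posrE; lra.
Qed.
Theorem propositionC2
  (R : realType) (K : nat)
  (theta : 'rV[R]_K) (theta_in : in_Theta theta)
  (* fairness rates p(·) (constant in the pre-specified case), exploration
     vector π_c, and the selection w*_p(·) *)
  (p : 'rV[R]_K -> 'rV[R]_K) (pic : 'rV[R]_K) (wsel : 'rV[R]_K -> 'rV[R]_K)
  (theta0 : 'rV[R]_K)
  (Hfair :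
     (exists p0 : 'rV[R]_K,
        [/\ valid_rates p0,
            (0 < K0 p0)%N -> \sum_a crd p0 a < 1,
            p = (fun _ => p0) & pic = pic_pre p0])
     \/
     [/\ continuous p, (forall lam, valid_rates (p lam)) & pic = pic_unif R K])
  (Hw : is_wstar p wsel)
  (* the probability space, the filtration and the process *)
  (d : measure_display) (Omega : measurableType d) (P : probability Omega R)
  (F : nat -> set (set Omega)) (HF : is_filtration F)
  (arm : nat -> Omega -> 'I_K) (rew : nat -> Omega -> R)
  (Harm_adapted : forall t a, F t (arm t @^-1` [set a]))
  (Hrew_adapted : forall t (B : set R), measurable B -> F t (rew t @^-1` B))
  (* at round t >= 1, given F_{t-1}, a_t ~ π(t) *)
  (Harm_law : forall t, (0 < t)%N -> forall E, F t.-1 E -> forall a,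
      P (E `&` arm t @^-1` [set a]) =
      (\int[P]_(w in E) (ftas_pi arm rew theta0 wsel pic t w a)%:E)%E)
  (* at round t >= 1, given F_{t-1} and a_t, r_t ~ N(θ_{a_t}, 1) *)
  (Hrew_law : forall t, (0 < t)%N -> forall E, F t.-1 E -> forall a (C : set R),
      measurable C ->
      P (E `&` arm t @^-1` [set a] `&` rew t @^-1` C) =
      (P (E `&` arm t @^-1` [set a]) * normal_prob (crd theta a) 1 C)%E) :
  forall a : 'I_K,
    P [set w | ((Npulls arm a t w)%:R : R) @[t --> \oo] --> +oo] = 1%E.
Proof.
move=> a.
set c := crd pic a.
have hK : (0 < K)%N by apply: leq_ltn_trans (ltn_ord a).
have hc : 0 < c.
  move: Hfair => [[p0 [[vr0 vs0] hs hp hpic]] | [_ _ hpic]]; last first.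
    by rewrite /c hpic /pic_unif crd_row invr_gt0 ltr0n.
  rewrite /c hpic /pic_pre crd_row; case: eqP => [K00|K0n].
    have hne : crd p0 a != 0.
      apply/negP => /eqP h; move/eqP: K00; rewrite /K0 => /eqP /card0_eq /(_ a).
      by rewrite mem_set //= h eqxx.
    have hpa : 0 < crd p0 a by rewrite lt_neqAle eq_sym hne; case/andP: (vr0 a).
    have : 0 <= (1 - \sum_a0 crd p0 a0) / K%:R by rewrite divr_ge0 // subr_ge0.
    lra.
  have K0p : (0 < K0 p0)%N by rewrite lt0n; apply/eqP.
  case: ifP => // _.
  by rewrite divr_gt0 // ?subr_gt0 ?hs // ltr0n.
have pib t w : (0 < t)%N -> c * eps_t R t <= ftas_pi arm rew theta0 wsel pic t w a.
  move=> t0; rewrite /ftas_pi -/c.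
  have := (((Hw (theta_hat arm rew theta0 t.-1 w)).1).1 a).2 => /andP[h0 _].
  have e1 := eps_le1 R t t0; have e0 := eps_ge0 R t.
  have : 0 <= (1 - eps_t R t) * crd (wsel (theta_hat arm rew theta0 t.-1 w)) a.
    by rewrite mulr_ge0 // subr_ge0.
  lra.
pose S s k := \sum_(i < k) c * eps_t R (s + i.+1)%N.
have S0 s k : 0 <= S s k.
  by apply: sumr_ge0 => i _; rewrite mulr_ge0 ?eps_ge0 // ltW.
have Sbig s M : 0 <= M -> exists k, M <= S s k.
  move=> M0.
  set b := Num.Def.archi_bound (4 * M / c).
  have hb : 4 * M / c < b%:R.
    by apply: archi_boundP; rewrite divr_ge0 // ?mulr_ge0 // ltW.
  exists ((s + b).+1 * (s + b).+1)%N.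
  have hl : \sum_(i < (s + b).+1 * (s + b).+1) (c * (1 / (4 * (s + b).+1%:R)))
            <= S s ((s + b).+1 * (s + b).+1).
    apply: ler_sum => i _; rewrite ler_pM2l //; apply: eps_lb; [lia|lia|].
    have hN : (s < (s + b).+1)%N by lia.
    have hNN : ((s + b).+1 <= (s + b).+1 * (s + b).+1)%N by rewrite leq_pmulr.
    move: (ltn_ord i); move: (nat_of_ord i) => j hj; clear i.
    rewrite -mulnA; move: hNN hj; move: ((s + b).+1 * (s + b).+1)%N => NN.
    lia.
  apply: le_trans hl; rewrite sumr_const card_ord -[_ *+ _]mulr_natl natrM.
  have Np : (0:R) < (s + b).+1%:R by rewrite ltr0n.
  have hbN : (b%:R : R) <= (s + b).+1%:R by rewrite ler_nat; lia.
  have -> : ((s + b).+1%:R * (s + b).+1%:R * (c * (1 / (4 * (s + b).+1%:R))) : R)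
            = c * (s + b).+1%:R / 4.
    by field; rewrite lt0r_neq0.
  move: hb; rewrite ltr_pdivrMr // => hb.
  nra.
pose B s t := [set w | forall u, (s < u <= t)%N -> arm u w != a].
have FB s t : F t (B s t).
  have -> : B s t = setT `\` \bigcup_u (if (s < u <= t)%N then arm u @^-1` [set a] else set0).
    apply/seteqP; split => w /=.
      move=> h; split => // -[u _]; case: ifP => [hu /= hau|_ []].
      by move: (h u hu); rewrite hau eqxx.
    move=> [_ h] u hu; apply/negP => /eqP hau; apply: h; exists u => //; rewrite hu; exact: hau.
  have [s0 sC sU] := HF.1 t.
  apply: sC; apply: sU => u; case: ifP => [/andP[_ hu]|_] //.
  exact: (HF.2.2 u t hu) (Harm_adapted u a).
have mF t A : F t A -> measurable A := fun h => HF.2.1 t A h.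
have inv s k : fine (P (B s (s + k)%N)) * (1 + S s k) <= 1.
  elim: k => [|k IH].
    rewrite /S big_ord0 addn0 addr0 mulr1.
    have mB := mF _ _ (FB s s).
    by have := probability_le1 P mB; rewrite -[P _]fineK ?fin_num_measure // lee_fin.
  set t := (s + k)%N.+1.
  have mE := mF _ _ (FB s (s + k)%N).
  have mX : measurable (arm t @^-1` [set a]) := mF _ _ (Harm_adapted t a).
  have eqB : B s (s + k.+1)%N = B s (s + k)%N `\` arm t @^-1` [set a].
    rewrite addnS; apply/seteqP; split => w /=.
      move=> h; split.
        move=> u /andP[hu1 hu2]; apply: h; by rewrite hu1 (leq_trans hu2 (leqnSn _)).
      move=> hau; have := h t; rewrite /t ltnS leq_addr leqnn /= => /(_ isT).
      by rewrite hau eqxx.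
    move=> [h1 h2] u /andP[hu1]; rewrite leq_eqVlt => /orP[/eqP->|hu2].
      by apply/eqP.
    by apply: h1; rewrite hu1 -ltnS.
  set y := fine (P (B s (s + k)%N)).
  set q := fine (P (B s (s + k)%N `&` arm t @^-1` [set a])).
  have mEX : measurable (B s (s + k)%N `&` arm t @^-1` [set a]) by exact: measurableI.
  have hD : P (B s (s + k.+1)%N) = (y - q)%:E.
    rewrite eqB measureD //; last by rewrite -(fineK (fin_num_measure P _ mE)) ltry.
    by rewrite EFinB /y /q !fineK // fin_num_measure.
  have hI : ((c * eps_t R t)%:E * P (B s (s + k)%N) <=
      \int[P]_(w in B s (s + k)%N) (ftas_pi arm rew theta0 wsel pic t w a)%:E)%E.
    rewrite -(integral_cst P mE); apply: int_mono => x _; rewrite lee_fin.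
      by rewrite mulr_ge0 ?eps_ge0 // ltW.
    exact: pib.
  have hq : c * eps_t R t * y <= q.
    rewrite -lee_fin /q fineK ?fin_num_measure //.
    rewrite (Harm_law t (ltn0Sn _) _ (FB s (s + k)%N) a).
    by apply: le_trans hI; rewrite /y EFinM fineK ?fin_num_measure.
  have y0 : 0 <= y by rewrite /y fine_ge0 // measure_ge0.
  rewrite hD /= /S big_ord_recr /= -/(S s k) addnS -/t.
  set x := c * eps_t R t.
  have x0 : 0 <= x by rewrite /x mulr_ge0 ?eps_ge0 // ltW.
  have Sk0 := S0 s k.
  have h1 : 0 <= x * y * (S s k + x) by rewrite !mulr_ge0 //; lra.
  have h2 : 0 <= (q - x * y) * (1 + S s k + x).
    by apply: mulr_ge0; [rewrite subr_ge0 | lra].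
  move: hq IH; rewrite -/x -/y => hq IH.
  nra.
pose C s := [set w | forall u, (s < u)%N -> arm u w != a].
have mC s : measurable (C s).
  have -> : C s = ~` \bigcup_(u in [set u | (s < u)%N]) (arm u @^-1` [set a]).
    apply/seteqP; split => w /=.
      by move=> h [u /= hu hau]; move: (h u hu); rewrite hau eqxx.
    move=> h u hu; apply/negP => /eqP hau; apply: h; by exists u.
  apply: measurableC; apply: bigcup_measurable => u _; exact: mF _ _ (Harm_adapted u a).
have PC s : P (C s) = 0%E.
  set z := fine (P (C s)).
  have hz : P (C s) = z%:E by rewrite /z fineK // fin_num_measure.
  have z0 : 0 <= z by rewrite /z fine_ge0 // measure_ge0.
  have zle k : z * (1 + S s k) <= 1.
    apply: le_trans (inv s k); have hS := S0 s k.
    rewrite ler_pM2r; last lra.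
    rewrite -lee_fin /z !fineK ?fin_num_measure //; last exact: (mF _ _ (FB s (s + k)%N)).
    apply: le_measure; [exact/mem_set/mC | exact/mem_set/(mF _ _ (FB s (s + k)%N)) |].
    by move=> w h u /andP[hu _]; exact: h.
  have zle0 : z <= 0.
    rewrite leNgt; apply/negP => zp.
    have zi : 0 < z^-1 by rewrite invr_gt0.
    have [k0 hk] := Sbig s (z^-1) (ltW zi).
    have := zle k0.
    have : 1 <= z * S s k0.
      by rewrite -(mulfV (lt0r_neq0 zp)) ler_pM2l.
    nra.
  by rewrite hz (_ : z = 0) //; apply: le_anti; rewrite zle0 z0.
have PU : P (\bigcup_s C s) = 0%E.
  apply/eqP; rewrite eq_le measure_ge0 andbT.
  apply: le_trans (measure_sigma_subadditive P mC (bigcupT_measurable _ mC) (@subset_refl _ _)) _.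
  by rewrite eseries0 // => i _ _; exact: PC.
have Ptarget : P (~` \bigcup_s C s) = 1%E.
  by rewrite probability_setC ?PU ?sube0 //; exact: bigcupT_measurable.
rewrite -Ptarget; congr (P _).
apply/seteqP; split => w /=.
  move=> hN [s _ Cs].
  have hb := Npulls_const _ _ arm a w s Cs.
  move/cvgryPge: hN => /(_ ((Npulls arm a s w)%:R + 1)) [t0 _ Ht0].
  have h1 := Ht0 t0 (leqnn t0).
  have h2 : ((Npulls arm a t0 w)%:R : R) <= (Npulls arm a s w)%:R by rewrite ler_nat.
  move: h1 => /= h1; lra.
move=> hw.
have hinf s : exists2 u, (s < u)%N & arm u w = a.
  apply: contrapT => hno; apply: hw; exists s => // u hu; apply/negP => /eqP hau.
  by apply: hno; exists u.
have hm m : exists t0, (m <= Npulls arm a t0 w)%N.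
  elim: m => [|m [t0 ht0]]; first by exists 0%N.
  have [u hu hau] := hinf t0.
  case: u hu hau => [//|u] hu hau; exists u.+1.
  rewrite NpullsS hau eqxx /= addn1 ltnS; apply: leq_trans ht0 _.
  exact: Npulls_mono.
apply/cvgryPge => A.
have [t0 ht0] := hm (Num.Def.archi_bound `|A|).
exists t0 => // t /= ht.
apply: le_trans (ler_norm A) _; apply: le_trans (ltW (archi_boundP (normr_ge0 A))) _.
rewrite ler_nat; apply: leq_trans ht0 _; exact: Npulls_mono.
Qed.
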